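(* Let $(\mathfrak g,[\cdot,\cdot]_{\mathfrak g})$ be a finite-dimensional Lie algebra and suppose its dual space $\mathfrak g^*$ carries a Lie bracket $[\cdot,\cdot]_{\mathfrak g^*}$. Let $E:\mathfrak g\to\mathfrak g$ be linear with dual map $E^*:\mathfrak g^*\to\mathfrak g^*$, and assume that $(\mathfrak g,[\cdot,\cdot]_{\mathfrak g},E)$ and $(\mathfrak g^*,[\cdot,\cdot]_{\mathfrak g^*},E^* )$ are ENL algebras. Then the following are equivalent: (i) $((\mathfrak g,E),(\mathfrak g^*,E^* );\mathrm{ad}^*,\mathfrak{ad}^* )$ is a matched pair of ENL algebras, where $\mathrm{ad}^*$ is the coadjoint action of $\mathfrak g$ on $\mathfrak g^*$ and $\mathfrak{ad}^*$ is the coadjoint action of $\mathfrak g^*$ on $\mathfrak g$; (ii) $((\mathfrak g\oplus\mathfrak g^*,\widehat E,S),(\mathfrak g,E),(\mathfrak g^*,E^* ))$ is a Manin triple of ENL algebras (for a Lie bracket on $\mathfrak g\oplus\mathfrak g^*$), where $\widehat E(x+\xi)=Ex+E^*\xi$ and $S(x+\xi,y+\eta)=\xi(y)+\eta(x)$ for $x,y\in\mathfrak g$, $\xi,\eta\in\mathfrak g^*$.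
   Context: All vector spaces are finite-dimensional over an algebraically closed field of characteristic zero. An ENL algebra $(\mathfrak g,[\cdot,\cdot],E)$ is a Lie algebra with a linear map $E$ satisfying $E[x,y]=[x,Ey]$ for all $x,y$ (equivalently $E\circ\mathrm{ad}_x=\mathrm{ad}_x\circ E$, equivalently $E[x,y]=[Ex,y]$). Coadjoint actions: $\langle\mathrm{ad}^*_x\xi,y\rangle=-\langle\xi,[x,y]_{\mathfrak g}\rangle$ and $\langle\mathfrak{ad}^*_\xi x,\eta\rangle=-\langle x,[\xi,\eta]_{\mathfrak g^*}\rangle$. A matched pair of Lie algebras $(\mathfrak g,\mathfrak h;\rho,\mu)$ consists of Lie algebras $\mathfrak g,\mathfrak h$ and representations $\rho:\mathfrak g\to\mathfrak{gl}(\mathfrak h)$, $\mu:\mathfrak h\to\mathfrak{gl}(\mathfrak g)$ with $\rho(x)[\xi,\eta]_{\mathfrak h}=[\rho(x)\xi,\eta]_{\mathfrak h}+[\xi,\rho(x)\eta]_{\mathfrak h}+\rho(\mu(\eta)x)\xi-\rho(\mu(\xi)x)\eta$ and $\mu(\xi)[x,y]_{\mathfrak g}=[\mu(\xi)x,y]_{\mathfrak g}+[x,\mu(\xi)y]_{\mathfrak g}+\mu(\rho(y)\xi)x-\mu(\rho(x)\xi)y$ for all $x,y\in\mathfrak g,\ \xi,\eta\in\mathfrak h$. For ENL algebras $(\mathfrak g,E)$, $(\mathfrak h,F)$, a matched pair of ENL algebras $((\mathfrak g,E),(\mathfrak h,F);\rho,\mu)$ is a matched pair of Lie algebras $(\mathfrak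 g,\mathfrak h;\rho,\mu)$ with $F(\rho(x)\xi)=\rho(Ex)\xi=\rho(x)(F\xi)$ and $E(\mu(\xi)x)=\mu(F\xi)x=\mu(\xi)(Ex)$ for all $x\in\mathfrak g,\xi\in\mathfrak h$. A quadratic ENL algebra $(\mathcal G,\mathcal E,S)$ is an ENL algebra $(\mathcal G,\mathcal E)$ with a nondegenerate symmetric bilinear form $S$ that is invariant ($S([x,y],z)+S(y,[x,z])=0$) and satisfies $S(\mathcal Ex,y)=S(x,\mathcal Ey)$. A Manin triple of ENL algebras $((\mathcal G,\mathcal E,S),(\mathfrak g,E),(\mathfrak h,F))$ consists of a quadratic ENL algebra $(\mathcal G,\mathcal E,S)$ and ENL algebras $(\mathfrak g,E),(\mathfrak h,F)$ such that $\mathfrak g,\mathfrak h$ are Lie subalgebras of $\mathcal G$ with $\mathcal E|_{\mathfrak g}=E$, $\mathcal E|_{\mathfrak h}=F$, $\mathcal G=\mathfrak g\oplus\mathfrak h$ as vector spaces, and $S(\mathfrak g,\mathfrak g)=0=S(\mathfrak h,\mathfrak h)$. *)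

(* Defs.v *)
From mathcomp Require Import all_boot all_algebra.
Set Implicit Arguments. Unset Strict Implicit. Unset Printing Implicit Defensive.
Import GRing.Theory.
Local Open Scope ring_scope.

Section Defs.
Variable K : fieldType.

Definition lin (V W : lmodType K) (f : V -> W) : Prop :=
  forall (a : K) (x y : V), f (a *: x + y) = a *: f x + f y.

Section Generic.
Variable V : lmodType K.

Definition is_lie (br : V -> V -> V) : Prop :=
  [/\ forall x, lin (br x), forall y, lin (br^~ y),
      forall x, br x x = 0 &
      forall x y z, br x (br y z) + br y (br z x) + br z (br x y) = 0].

Definition is_ENL (br : V -> V -> V) (E : V -> V) : Prop :=
  [/\ is_lie br, lin E & forall x y, E (br x y) = br x (E y)].

Definition is_quadratic_ENL (br : V -> V -> V) (E : V -> V) (S : V -> V -> K)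
  : Prop :=
  [/\ is_ENL br E,
      (forall x, lin (S x : V -> K^o)) /\ (forall x y, S x y = S y x),
      (forall x, (forall y, S x y = 0) -> x = 0),
      (forall x y z, S (br x y) z + S y (br x z) = 0) &
      (forall x y, S (E x) y = S x (E y))].
End Generic.

Section Reps.
Variable G H : lmodType K.
Definition is_rep (brG : G -> G -> G) (rho : G -> H -> H) : Prop :=
  [/\ forall x, lin (rho x), forall v, lin (rho^~ v) &
      forall x y v, rho (brG x y) v = rho x (rho y v) - rho y (rho x v)].
End Reps.

Definition matched_pair (g h : lmodType K) (brg : g -> g -> g)
  (brh : h -> h -> h) (rho : g -> h -> h) (mu : h -> g -> g) : Prop :=
  [/\ is_lie brg /\ is_lie brh, is_rep brg rho, is_rep brh mu,
      (forall x xi eta, rho x (brh xi eta) =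
         brh (rho x xi) eta + brh xi (rho x eta)
         + rho (mu eta x) xi - rho (mu xi x) eta) &
      (forall xi x y, mu xi (brg x y) =
         brg (mu xi x) y + brg x (mu xi y)
         + mu (rho y xi) x - mu (rho x xi) y)].

Definition matched_pair_ENL (g h : lmodType K) (brg : g -> g -> g) (E : g -> g)
  (brh : h -> h -> h) (F : h -> h) (rho : g -> h -> h) (mu : h -> g -> g)
  : Prop :=
  [/\ is_ENL brg E, is_ENL brh F, matched_pair brg brh rho mu,
      (forall x xi, F (rho x xi) = rho (E x) xi /\ rho (E x) xi = rho x (F xi)) &
      (forall x xi, E (mu xi x) = mu (F xi) x /\ mu (F xi) x = mu xi (E x))].

(* ---------- g = K^n (row vectors), g^* = K^n with the standard pairing ---------- *)
Variable n : nat.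
Local Notation vec := 'rV[K]_n.

(* <xi, x> = xi(x), for xi in g^*, x in g *)
Definition pairing (xi x : vec) : K := \sum_(i < n) xi 0 i * x 0 i.

Definition basis_vec (i : 'I_n) : vec := delta_mx 0 i.

(* dual map E^* : g^* -> g^*, <E^* xi, x> = <xi, E x> *)
Definition dualmap (E : vec -> vec) (xi : vec) : vec :=
  \row_i pairing xi (E (basis_vec i)).

(* coadjoint action of g on g^*: <ad^*_x xi, y> = - <xi, [x,y]_g> *)
Definition ad_star (brg : vec -> vec -> vec) (x xi : vec) : vec :=
  \row_i (- pairing xi (brg x (basis_vec i))).

(* coadjoint action of g^* on g: <frak_ad^*_xi x, eta> = - <[xi,eta]_{g^*}, x> *)
Definition frak_ad_star (brgs : vec -> vec -> vec) (xi x : vec) : vec :=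
  \row_i (- pairing (brgs xi (basis_vec i)) x).

(* the double g (+) g^*, with elements (x, xi) *)
Definition Ehat (E : vec -> vec) (u : vec * vec) : vec * vec :=
  (E u.1, dualmap E u.2).

Definition Sform (u v : vec * vec) : K := pairing u.2 v.1 + pairing v.2 u.1.

(* Manin triple of ENL algebras ((g (+) g^*, Ehat, S), (g,E), (g^* ,E^* ))
   for the bracket brD on g (+) g^*; g embeds as (x,0), g^* as (0,xi). *)
Definition manin_triple_ENL (brD : vec * vec -> vec * vec -> vec * vec)
  (brg : vec -> vec -> vec) (E : vec -> vec) (brgs : vec -> vec -> vec) : Prop :=
  [/\ is_quadratic_ENL brD (Ehat E) Sform,
      is_ENL brg E /\ is_ENL brgs (dualmap E),
      (forall x y, brD (x, 0) (y, 0) = (brg x y, 0)),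
      (forall xi eta, brD (0, xi) (0, eta) = (0, brgs xi eta)) &
      (forall x xi, Ehat E (x, 0) = (E x, 0) /\ Ehat E (0, xi) = (0, dualmap E xi))].
(* g (+) g^* = g \oplus g^* as vector spaces and S(g,g) = 0 = S(g^*,g^* ) hold
   by construction of the product and of Sform. *)

End Defs.

(* Main.v *)
Require Import Defs.
From mathcomp Require Import all_boot all_algebra.
From mathcomp Require Import ring.
Set Implicit Arguments. Unset Strict Implicit. Unset Printing Implicit Defensive.
Import GRing.Theory.
Local Open Scope ring_scope.

Section Gen.
Variable K : fieldType.

Section L.
Variables (V W : lmodType K) (f : V -> W) (Hf : lin f).
Lemma lin0 : f 0 = 0.
Proof.
have := Hf 1 0 0; rewrite scaler0 add0r scale1r => /eqP.
by rewrite -subr_eq subrr eq_sym => /eqP.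
Qed.
Lemma linD x y : f (x + y) = f x + f y.
Proof. by rewrite -{1}[x]scale1r Hf scale1r. Qed.
Lemma linZ a x : f (a *: x) = a *: f x.
Proof. by rewrite -[a *: x]addr0 Hf lin0 addr0. Qed.
Lemma linN x : f (- x) = - f x.
Proof. by rewrite -scaleN1r linZ scaleN1r. Qed.
Lemma linB x y : f (x - y) = f x - f y.
Proof. by rewrite linD linN. Qed.
Lemma linsum m (F : 'I_m -> V) : f (\sum_(i < m) F i) = \sum_(i < m) f (F i).
Proof.
apply: (big_rec2 (fun a b => f a = b)) => [|i y1 y2 _ <-]; first exact: lin0.
by rewrite linD.
Qed.
End L.

Lemma scaleKo (a b : K^o) : a *: b = a * b. Proof. by []. Qed.

Variable n : nat.
Local Notation vec := 'rV[K]_n.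

Lemma pairingC (a b : vec) : pairing a b = pairing b a.
Proof. by apply: eq_bigr => i _; rewrite mulrC. Qed.
Lemma pairing_linl (x : vec) : lin (fun xi : vec => (pairing xi x : K^o)).
Proof.
move=> a u v; rewrite /pairing scaleKo mulr_sumr -big_split /=.
by apply: eq_bigr => i _; rewrite !mxE mulrDl mulrA.
Qed.
Lemma pairing_linr (xi : vec) : lin (fun x : vec => (pairing xi x : K^o)).
Proof.
move=> a u v; rewrite /pairing scaleKo mulr_sumr -big_split /=.
by apply: eq_bigr => i _; rewrite !mxE mulrDr mulrCA.
Qed.
Lemma pairing_basis_r (xi : vec) i : pairing xi (basis_vec K i) = xi 0 i.
Proof.
rewrite /pairing (bigD1 i) //= big1 => [|j ji]; rewrite /basis_vec mxE.
  by rewrite !eqxx mulr1 addr0.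
by rewrite (negbTE ji) andbF mulr0.
Qed.
Lemma pairing_basis_l (x : vec) i : pairing (basis_vec K i) x = x 0 i.
Proof. by rewrite pairingC pairing_basis_r. Qed.

Lemma pairing_row (g : vec -> K^o) (x : vec) : lin g ->
  pairing (\row_i g (basis_vec K i)) x = g x.
Proof.
move=> Hg; rewrite {2}(row_sum_delta x) linsum //.
apply: eq_bigr => i _; rewrite mxE linZ // scaleKo mulrC.
done.
Qed.

Lemma pairingDl (a b x : vec) : pairing (a + b) x = pairing a x + pairing b x.
Proof. exact: (linD (pairing_linl x)). Qed.
Lemma pairingDr (a b x : vec) : pairing x (a + b) = pairing x a + pairing x b.
Proof. exact: (linD (pairing_linr x)). Qed.
Lemma pairingNl (a x : vec) : pairing (- a) x = - pairing a x.
Proof. exact: (linN (pairing_linl x)). Qed.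
Lemma pairingNr (a x : vec) : pairing x (- a) = - pairing x a.
Proof. exact: (linN (pairing_linr x)). Qed.
Lemma pairingZl c (a x : vec) : pairing (c *: a) x = c * pairing a x.
Proof. exact: (linZ (pairing_linl x)). Qed.
Lemma pairingZr c (a x : vec) : pairing x (c *: a) = c * pairing x a.
Proof. exact: (linZ (pairing_linr x)). Qed.
Lemma pairing0l (x : vec) : pairing 0 x = 0.
Proof. exact: (lin0 (pairing_linl x)). Qed.
Lemma pairing0r (x : vec) : pairing x 0 = 0.
Proof. exact: (lin0 (pairing_linr x)). Qed.

Section Lie.
Variables (V : lmodType K) (br : V -> V -> V) (H : is_lie br).
Lemma lieDl x y z : br (x + y) z = br x z + br y z.
Proof. by case: H => _ Hl _ _; exact: (linD (Hl z)). Qed.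
Lemma lieDr x y z : br z (x + y) = br z x + br z y.
Proof. by case: H => Hr _ _ _; exact: (linD (Hr z)). Qed.
Lemma lieNl x z : br (- x) z = - br x z.
Proof. by case: H => _ Hl _ _; exact: (linN (Hl z)). Qed.
Lemma lieNr x z : br z (- x) = - br z x.
Proof. by case: H => Hr _ _ _; exact: (linN (Hr z)). Qed.
Lemma lieZl c x z : br (c *: x) z = c *: br x z.
Proof. by case: H => _ Hl _ _; exact: (linZ (Hl z)). Qed.
Lemma lieZr c x z : br z (c *: x) = c *: br z x.
Proof. by case: H => Hr _ _ _; exact: (linZ (Hr z)). Qed.
Lemma lie0l z : br 0 z = 0.
Proof. by case: H => _ Hl _ _; exact: (lin0 (Hl z)). Qed.
Lemma lie0r z : br z 0 = 0.
Proof. by case: H => Hr _ _ _; exact: (lin0 (Hr z)). Qed.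
Lemma lieA x y : br x y = - br y x.
Proof.
case: H => _ _ Ha _; have := Ha (x + y).
rewrite lieDl !lieDr !Ha add0r addr0 => /eqP; rewrite addr_eq0 => /eqP.
by [].
Qed.
Lemma lieX x : br x x = 0. Proof. by case: H. Qed.
Lemma lieJ x y z : br x (br y z) + br y (br z x) + br z (br x y) = 0.
Proof. by case: H. Qed.
Lemma lieJz x y z : br z (br x y) = - br x (br y z) - br y (br z x).
Proof.
have := lieJ x y z; move/eqP; rewrite addrC addr_eq0 => /eqP ->.
by rewrite opprD.
Qed.
Lemma lieLL x y z : br (br x y) z = br x (br y z) - br y (br x z).
Proof.
rewrite (lieA (br x y)); have := lieJ x y z; rewrite (lieA z x) lieNr.
by move/eqP; rewrite addrC addr_eq0 => /eqP ->; rewrite opprK.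
Qed.
End Lie.
Section ENL.
Variables (V : lmodType K) (br : V -> V -> V) (F : V -> V).
Hypothesis HF : is_ENL br F.
Lemma ENLr x y : F (br x y) = br x (F y). Proof. by case: HF. Qed.
Lemma ENLl x y : F (br x y) = br (F x) y.
Proof.
case: HF => H HFl _; rewrite (lieA H) (linN HFl) ENLr -(lieA H) //.
Qed.
End ENL.

Local Notation e := (basis_vec K).

Lemma lin_row (f : vec -> vec) (g : vec -> 'I_n -> K) :
  (forall i a x y, g (a *: x + y) i = a * g x i + g y i) ->
  (forall x, f x = \row_i g x i) -> lin f.
Proof. by move=> Hg Hf a x y; rewrite !Hf; apply/rowP => i; rewrite !mxE Hg. Qed.

Section Main.
Variables (brg brgs : vec -> vec -> vec) (E : vec -> vec).
Hypotheses (Lg : is_lie brg) (Ls : is_lie brgs) (HE : lin E)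
  (ENg : is_ENL brg E) (ENs : is_ENL brgs (dualmap E)).

Local Notation rho := (ad_star brg).
Local Notation mu := (frak_ad_star brgs).
Local Notation Es := (dualmap E).

Lemma rho_entry x xi i : rho x xi 0 i = - pairing xi (brg x (e i)).
Proof. by rewrite mxE. Qed.
Lemma mu_entry xi x i : mu xi x 0 i = - pairing (brgs xi (e i)) x.
Proof. by rewrite mxE. Qed.
Lemma Es_entry xi i : Es xi 0 i = pairing xi (E (e i)).
Proof. by rewrite mxE. Qed.

Lemma rho_pair x xi y : pairing (rho x xi) y = - pairing xi (brg x y).
Proof.
rewrite /ad_star; apply: (pairing_row (g := fun y => - pairing xi (brg x y) : K^o)).
move=> a u v; rewrite scaleKo (lieDr Lg) (lieZr Lg) pairingDr pairingZr.
by rewrite opprD mulrN.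
Qed.
Lemma mu_pair xi x eta : pairing eta (mu xi x) = - pairing (brgs xi eta) x.
Proof.
rewrite pairingC /frak_ad_star.
apply: (pairing_row (g := fun eta => - pairing (brgs xi eta) x : K^o)).
move=> a u v; rewrite scaleKo (lieDr Ls) (lieZr Ls) pairingDl pairingZl.
by rewrite opprD mulrN.
Qed.
Lemma Es_pair xi x : pairing (Es xi) x = pairing xi (E x).
Proof.
rewrite /dualmap; apply: (pairing_row (g := fun x => pairing xi (E x) : K^o)).
by move=> a u v; rewrite scaleKo HE pairingDr pairingZr.
Qed.
Lemma E_entry x i : E x 0 i = pairing (Es (e i)) x.
Proof. by rewrite Es_pair pairing_basis_l. Qed.

Lemma rho_linr x : lin (rho x).
Proof.
apply: (lin_row (g := fun xi i => - pairing xi (brg x (e i)))) => //.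
by move=> i a u v; rewrite pairingDl pairingZl opprD mulrN.
Qed.
Lemma rho_linl xi : lin (rho^~ xi).
Proof.
apply: (lin_row (g := fun x i => - pairing xi (brg x (e i)))) => //.
by move=> i a u v; rewrite (lieDl Lg) (lieZl Lg) pairingDr pairingZr opprD mulrN.
Qed.
Lemma mu_linr xi : lin (mu xi).
Proof.
apply: (lin_row (g := fun x i => - pairing (brgs xi (e i)) x)) => //.
by move=> i a u v; rewrite pairingDr pairingZr opprD mulrN.
Qed.
Lemma mu_linl x : lin (mu^~ x).
Proof.
apply: (lin_row (g := fun xi i => - pairing (brgs xi (e i)) x)) => //.
by move=> i a u v; rewrite (lieDl Ls) (lieZl Ls) pairingDl pairingZl opprD mulrN.
Qed.
Lemma Es_lin : lin Es.
Proof.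
apply: (lin_row (g := fun xi i => pairing xi (E (e i)))) => //.
by move=> i a u v; rewrite pairingDl pairingZl.
Qed.

Lemma rho_rep x y xi : rho (brg x y) xi = rho x (rho y xi) - rho y (rho x xi).
Proof.
apply/rowP => i; rewrite !mxE !rho_pair (lieLL Lg) pairingDr pairingNr.
ring.
Qed.
Lemma mu_rep xi eta x : mu (brgs xi eta) x = mu xi (mu eta x) - mu eta (mu xi x).
Proof.
apply/rowP => i; rewrite !mxE !mu_pair (lieLL Ls) pairingDl pairingNl.
ring.
Qed.

Lemma F1 x xi : Es (rho x xi) = rho (E x) xi.
Proof.
apply/rowP => i; rewrite !mxE rho_pair -(ENLr ENg) (ENLl ENg) //.
Qed.
Lemma F2 x xi : rho (E x) xi = rho x (Es xi).
Proof.
apply/rowP => i; rewrite !mxE Es_pair -(ENLl ENg) //.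
Qed.
Lemma F3 xi x : E (mu xi x) = mu (Es xi) x.
Proof.
apply/rowP => i; rewrite E_entry mu_pair !mxE -(ENLr ENs) (ENLl ENs) //.
Qed.
Lemma F4 xi x : mu (Es xi) x = mu xi (E x).
Proof.
apply/rowP => i; rewrite !mxE -Es_pair (ENLl ENs) //.
Qed.

Lemma rhoDr x a b : rho x (a + b) = rho x a + rho x b. Proof. exact: (linD (rho_linr x) a b). Qed.
Lemma rhoNr x a : rho x (- a) = - rho x a. Proof. exact: (linN (rho_linr x) a). Qed.
Lemma rhoZr x c a : rho x (c *: a) = c *: rho x a. Proof. exact: (linZ (rho_linr x) c a). Qed.
Lemma rho0r x : rho x 0 = 0. Proof. exact: lin0 (rho_linr x). Qed.
Lemma rhoDl x a b : rho (a + b) x = rho a x + rho b x. Proof. exact: (linD (rho_linl x) a b). Qed.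
Lemma rhoNl x a : rho (- a) x = - rho a x. Proof. exact: (linN (rho_linl x) a). Qed.
Lemma rhoZl x c a : rho (c *: a) x = c *: rho a x. Proof. exact: (linZ (rho_linl x) c a). Qed.
Lemma rho0l x : rho 0 x = 0. Proof. exact: lin0 (rho_linl x). Qed.
Lemma muDr x a b : mu x (a + b) = mu x a + mu x b. Proof. exact: (linD (mu_linr x) a b). Qed.
Lemma muNr x a : mu x (- a) = - mu x a. Proof. exact: (linN (mu_linr x) a). Qed.
Lemma muZr x c a : mu x (c *: a) = c *: mu x a. Proof. exact: (linZ (mu_linr x) c a). Qed.
Lemma mu0r x : mu x 0 = 0. Proof. exact: lin0 (mu_linr x). Qed.
Lemma muDl x a b : mu (a + b) x = mu a x + mu b x. Proof. exact: (linD (mu_linl x) a b). Qed.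
Lemma muNl x a : mu (- a) x = - mu a x. Proof. exact: (linN (mu_linl x) a). Qed.
Lemma muZl x c a : mu (c *: a) x = c *: mu a x. Proof. exact: (linZ (mu_linl x) c a). Qed.
Lemma mu0l x : mu 0 x = 0. Proof. exact: lin0 (mu_linl x). Qed.

Ltac expand := repeat progress rewrite ?(lieDr Lg) ?(lieDl Lg) ?(lieNr Lg) ?(lieNl Lg)
  ?(lieZr Lg) ?(lieZl Lg) ?(lie0r Lg) ?(lie0l Lg)
  ?(lieDr Ls) ?(lieDl Ls) ?(lieNr Ls) ?(lieNl Ls)
  ?(lieZr Ls) ?(lieZl Ls) ?(lie0r Ls) ?(lie0l Ls)
  ?rhoDr ?rhoNr ?rhoZr ?rho0r ?rhoDl ?rhoNl ?rhoZl ?rho0l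
  ?muDr ?muNr ?muZr ?mu0r ?muDl ?muNl ?muZl ?mu0l.

Ltac entry := apply/rowP => i; rewrite !mxE; ring.

Definition stdD (u v : vec * vec) : vec * vec :=
  (brg u.1 v.1 + mu u.2 v.1 - mu v.2 u.1, brgs u.2 v.2 + rho u.1 v.2 - rho v.1 u.2).

Lemma pairE (p q : vec * vec) : p.1 = q.1 -> p.2 = q.2 -> p = q.
Proof. by case: p; case: q => /= ? ? ? ? -> ->. Qed.

Lemma stdD_linr u : lin (stdD u).
Proof.
move=> a v w; apply: pairE => /=; expand; entry.
Qed.
Lemma stdD_linl v : lin (stdD^~ v).
Proof.
move=> a u w; apply: pairE => /=; expand; entry.
Qed.
Lemma stdD_alt u : stdD u u = 0.
Proof.
by apply: pairE => /=; rewrite ?(lieX Lg) ?(lieX Ls) add0r subrr.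
Qed.

Section MP.
Hypothesis MP1 : forall x xi eta, rho x (brgs xi eta) =
  brgs (rho x xi) eta + brgs xi (rho x eta) + rho (mu eta x) xi - rho (mu xi x) eta.
Hypothesis MP2 : forall xi x y, mu xi (brg x y) =
  brg (mu xi x) y + brg x (mu xi y) + mu (rho y xi) x - mu (rho x xi) y.

Lemma stdD_jac u v w : stdD u (stdD v w) + stdD v (stdD w u) + stdD w (stdD u v) = 0.
Proof.
case: u => x xi; case: v => y eta; case: w => z zeta.
apply: pairE => /=; expand.
- rewrite (lieJz Lg x y z) (MP2 xi y z) (MP2 eta z x) (MP2 zeta x y).
  rewrite (mu_rep eta zeta x) (mu_rep zeta xi y) (mu_rep xi eta z).
  rewrite (lieA Lg (mu xi y) z) (lieA Lg (mu eta z) x) (lieA Lg (mu zeta x) y).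
  entry.
- rewrite (lieJz Ls xi eta zeta) (MP1 x eta zeta) (MP1 y zeta xi) (MP1 z xi eta).
  rewrite (rho_rep y z xi) (rho_rep z x eta) (rho_rep x y zeta).
  rewrite (lieA Ls (rho x eta) zeta) (lieA Ls (rho y zeta) xi) (lieA Ls (rho z xi) eta).
  entry.
Qed.

Lemma stdD_lie : is_lie stdD.
Proof. split; [exact: stdD_linr | exact: stdD_linl | exact: stdD_alt | exact: stdD_jac]. Qed.
End MP.

Ltac pexpand := repeat progress rewrite ?pairingDl ?pairingDr ?pairingNl ?pairingNr
  ?pairingZl ?pairingZr ?pairing0l ?pairing0r ?rho_pair ?mu_pair.

Lemma S_inv u v w : Sform (stdD u v) w + Sform v (stdD u w) = 0.
Proof.
case: u => x xi; case: v => y eta; case: w => z zeta.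
rewrite /Sform /=; pexpand.
rewrite (lieA Lg z y) (lieA Ls zeta eta); pexpand; ring.
Qed.

Lemma ED a b : E (a + b) = E a + E b. Proof. exact: (linD HE a b). Qed.
Lemma EN a : E (- a) = - E a. Proof. exact: (linN HE a). Qed.
Lemma E0 : E 0 = 0. Proof. exact: (lin0 HE). Qed.
Lemma EsD a b : Es (a + b) = Es a + Es b. Proof. exact: (linD Es_lin a b). Qed.
Lemma EsN a : Es (- a) = - Es a. Proof. exact: (linN Es_lin a). Qed.
Lemma Es0 : Es 0 = 0. Proof. exact: (lin0 Es_lin). Qed.

Lemma dirA : matched_pair_ENL brg E brgs Es rho mu -> manin_triple_ENL stdD brg E brgs.
Proof.
case=> _ _ [_ _ _ MP1 MP2] _ _.
split.
- split.
  + split; first exact: stdD_lie MP1 MP2.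
    * move=> a u v; apply: pairE => /=; [exact: HE | exact: Es_lin].
    * move=> [x xi] [y eta]; apply: pairE => /=.
        by rewrite !(ED, EN) (ENLr ENg) !F3 (F4 xi y).
      by rewrite !(EsD, EsN) (ENLr ENs) !F1 (F2 x eta).
  + split; last by move=> u v; rewrite /Sform addrC.
    move=> u a v w; rewrite /Sform /= scaleKo; pexpand; ring.
  + move=> [x xi] H; apply: pairE => /=; apply/rowP => i; rewrite mxE.
      by have := H (0, e i); rewrite /Sform /= pairing0r pairing_basis_l add0r.
    by have := H (e i, 0); rewrite /Sform /= pairing0l pairing_basis_r addr0.
  + exact: S_inv.
  + move=> [x xi] [y eta]; rewrite /Sform /= !Es_pair addrC //.
- by split.
- by move=> x y; apply: pairE => /=; expand; rewrite ?subr0 ?addr0.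
- by move=> x y; apply: pairE => /=; expand; rewrite ?subr0 ?addr0 ?add0r.
- by move=> x xi; rewrite /Ehat /= E0 Es0.
Qed.

Lemma eq_from0 (a b c : vec) (s : K) : c = 0 -> a - b = s *: c -> a = b.
Proof. by move=> ->; rewrite scaler0 => /eqP; rewrite subr_eq0 => /eqP. Qed.

Lemma solveK (a b c : K) (s : K) : c = 0 -> a - b = s * c -> a = b.
Proof. by move=> ->; rewrite mulr0 => /eqP; rewrite subr_eq0 => /eqP. Qed.

Section DirB.
Variable brD : vec * vec -> vec * vec -> vec * vec.
Hypothesis HM : manin_triple_ENL brD brg E brgs.

Lemma BX x xi : brD (x, 0) (0, xi) = (- mu xi x, rho x xi).
Proof.
case: HM => [[[LD _ _] _ Snd Sinv _] _ Hgg Hss _].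
apply: pairE; apply/rowP => i /=.
- have := Sinv (0, xi) (x, 0) (0, e i).
  rewrite (lieA LD (0, xi)) Hss /Sform /= ?pairing0r ?pairing0l pairingNr pairing_basis_l.
  by move=> H; apply: (solveK (s := -1) H); rewrite !mxE; ring.
- have := Sinv (x, 0) (0, xi) (e i, 0).
  rewrite Hgg /Sform /= ?pairing0r ?pairing0l pairing_basis_r.
  by move=> H; apply: (solveK (s := 1) H); rewrite !mxE; ring.
Qed.

Lemma LD : is_lie brD. Proof. by case: HM => [[[]]]. Qed.

Lemma brD_std u v : brD u v = stdD u v.
Proof.
case: HM => [_ _ Hgg Hss _].
case: u => x xi; case: v => y eta.
have Hu : forall (a b : vec), (a, b) = (a, 0) + (0, b).
  by move=> a b; apply: pairE => /=; rewrite ?addr0 ?add0r.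
rewrite (Hu x xi) (Hu y eta) !(lieDl LD) !(lieDr LD) Hgg Hss !BX.
rewrite (lieA LD (0, xi)) BX.
apply: pairE => /=; expand; entry.
Qed.

Lemma MP2B xi x y : mu xi (brg x y) =
  brg (mu xi x) y + brg x (mu xi y) + mu (rho y xi) x - mu (rho x xi) y.
Proof.
have J := lieJ LD (x, 0) (y, 0) (0, xi).
rewrite !brD_std in J; have J1 := congr1 fst J; move: J1 => /=.
expand => H; rewrite (lieA Lg (mu xi x) y).
apply: (eq_from0 (s := 1) H); entry.
Qed.

Lemma MP1B x xi eta : rho x (brgs xi eta) =
  brgs (rho x xi) eta + brgs xi (rho x eta) + rho (mu eta x) xi - rho (mu xi x) eta.
Proof.
have J := lieJ LD (x, 0) (0, xi) (0, eta).
rewrite !brD_std in J; have J1 := congr1 snd J; move: J1 => /=.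
expand => H; rewrite (lieA Ls (rho x xi) eta).
refine (eq_from0 (s := 1) H _); entry.
Qed.

Lemma dirB : matched_pair_ENL brg E brgs Es rho mu.
Proof.
split => //.
- split; [by [] | | | exact: MP1B | exact: MP2B].
  + split; [exact: rho_linr | exact: rho_linl | exact: rho_rep].
  + split; [exact: mu_linr | exact: mu_linl | exact: mu_rep].
- by move=> x xi; split; [exact: F1 | exact: F2].
- by move=> x xi; split; [exact: F3 | exact: F4].
Qed.
End DirB.
End Main.
End Gen.

Unset Implicit Arguments.
Set Strict Implicit.

Theorem theorem2p9 (K : closedFieldType) (Kchar0 : [pchar K] =i pred0) (n : nat)
  (brg brgs : 'rV[K]_n -> 'rV[K]_n -> 'rV[K]_n) (E : 'rV[K]_n -> 'rV[K]_n) :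
  is_lie brg -> is_lie brgs -> lin E ->
  is_ENL brg E -> is_ENL brgs (dualmap E) ->
  (matched_pair_ENL brg E brgs (dualmap E) (ad_star brg) (frak_ad_star brgs)
   <-> exists brD : 'rV[K]_n * 'rV[K]_n -> 'rV[K]_n * 'rV[K]_n -> 'rV[K]_n * 'rV[K]_n,
         manin_triple_ENL brD brg E brgs).
Proof.
move=> Lg Ls HE ENg ENs; split.
  by move=> H; exists (stdD brg brgs); apply: dirA.
by case=> brD H; apply: (dirB Lg Ls HE ENg ENs H).
Qed.
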